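(* Let $(X\cup Y,\mathbf{d})$ be a finite metric space with opening costs $\mathrm{open}(f)>0$ for $f\in Y$, let $\epsilon \in (0,\frac 12 )$ and let $S\subseteq Y$ be a $c$-approximation to the facility location problem on this instance. For each $x\in X$ let $N_x$ be an $\epsilon \cdot \mathbf{d}(x, S)$-net of $B_Y(\pi_S(x), \mathbf{d}(x,S)/\epsilon)$ and define $\widehat{\mathbf{d}}_S(x,y) = \min_{u\in N_x} \mathbf{d}(x,u) + \mathbf{d}(u,y)$ for $y\in Y$. Then for any set $F\subseteq Y$, \[ \widehat{\mathbf{d}}_S(X,F) + \sum_{f\in F} \mathrm{open}(f) \le (1+6c \epsilon) \cdot \mathrm{fl}(X,F), \] where $\widehat{\mathbf{d}}_S(X,F)=\sum_{x\in X}\min_{y\in F}\widehat{\mathbf{d}}_S(x,y)$ and $\mathrm{fl}(X,F)=\sum_{x\in X}\mathbf{d}(x,F)+\sum_{f\in F}\mathrm{open}(f)$.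
   Context: Facility location: find $F\subseteq Y$ minimizing $\mathrm{fl}(X,F)$; $S$ is a $c$-approximation if $\mathrm{fl}(X,S)\le c\cdot\min_{F\subseteq Y}\mathrm{fl}(X,F)$. $B_Y(x,r)=\{y\in Y:\mathbf{d}(x,y)\le r\}$; $\pi_S(x)$ is a point of $S$ closest to $x$, $\mathbf{d}(x,S)=\mathbf{d}(x,\pi_S(x))$, $\mathbf{d}(x,F)=\min_{f\in F}\mathbf{d}(x,f)$. A $\rho$-net of $B$ is a subset $N\subseteq B$ whose distinct points are pairwise at distance $\ge\rho$ and such that every point of $B$ is within distance $\rho$ of some point of $N$. *)

(* Defs.v *)
From HB Require Import structures.
From mathcomp Require Import all_boot all_order all_algebra.
Set Implicit Arguments. Unset Strict Implicit. Unset Printing Implicit Defensive.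
Import Order.TTheory GRing.Theory Num.Theory.
Local Open Scope ring_scope.

Section FL.
Variables (R : realFieldType) (T : finType).

(* Minimum of f over a finite set A (A nonempty); 0 if A is empty
   (the empty case is never used by the statement). *)
Definition setmin (A : {set T}) (f : T -> R) : R :=
  if [pick u in A] is Some u0 then \big[Num.min/f u0]_(u in A) f u else 0.

Definition is_metric_on (P : {set T}) (d : T -> T -> R) : Prop :=
  [/\ {in P &, forall x y, 0 <= d x y},
      {in P &, forall x y, d x y = 0 <-> x = y},
      {in P &, forall x y, d x y = d y x} &
      {in P & &, forall x y z, d x z <= d x y + d y z}].

Definition dist_set (d : T -> T -> R) (x : T) (F : {set T}) : R := setmin F (d x).

Definition fl (d : T -> T -> R) (op : T -> R) (X F : {set T}) : R :=
  \sum_(x in X) dist_set d x F + \sum_(f in F) op f.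

Definition ballY (d : T -> T -> R) (Y : {set T}) (z : T) (r : R) : {set T} :=
  [set y in Y | d z y <= r].

Definition is_net (d : T -> T -> R) (rho : R) (B N : {set T}) : Prop :=
  [/\ N \subset B,
      {in N &, forall u v, u != v -> rho <= d u v} &
      {in B, forall b, exists2 u, u \in N & d b u <= rho}].

(* S is a c-approximation: S ⊆ Y and fl(X,S) <= c * fl(X,F) for every
   (nonempty) F ⊆ Y, i.e. fl(X,S) <= c * min_F fl(X,F). *)
Definition c_approx (d : T -> T -> R) (op : T -> R) (X Y S : {set T}) (c : R) : Prop :=
  [/\ S \subset Y, S != set0 &
      forall F : {set T}, F \subset Y -> F != set0 -> fl d op X S <= c * fl d op X F].

Definition dhat (d : T -> T -> R) (N : T -> {set T}) (x y : T) : R :=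
  setmin (N x) (fun u => d x u + d u y).

Definition dhat_set (d : T -> T -> R) (N : T -> {set T}) (X F : {set T}) : R :=
  \sum_(x in X) setmin F (dhat d N x).

End FL.

(* Main.v *)
Require Import Defs.
From HB Require Import structures.
From mathcomp Require Import all_boot all_order all_algebra.
From mathcomp Require Import lra.
Import Order.TTheory GRing.Theory Num.Theory.
Local Open Scope ring_scope.
Lemma setmin_le (R : realFieldType) (T : finType) (A : {set T}) (f : T -> R) a :
  a \in A -> setmin A f <= f a.
Proof.
move=> aA; rewrite /setmin; case: pickP => [u0 Hu0|H]; last by rewrite H in aA.
exact: bigmin_le_cond.
Qed.

Lemma setmin_ex (R : realFieldType) (T : finType) (A : {set T}) (f : T -> R) a :
  a \in A -> exists2 b, b \in A & setmin A f = f b.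
Proof.
move=> aA; rewrite /setmin; case: pickP => [u0 Hu0|H]; last by rewrite H in aA.
apply: (big_ind (fun v => exists2 b, b \in A & v = f b)).
- by exists u0.
- move=> x y [b1 H1 ->] [b2 H2 ->].
  by case: (leP (f b1) (f b2)) => _; [exists b1|exists b2].
- by move=> i iA; exists i.
Qed.

Lemma perx (R : realFieldType) (T : finType) (X Y : {set T})
    (d : T -> T -> R) (eps : R) (S : {set T})
    (pi : T -> T) (N : T -> {set T}) (F : {set T}) x :
  is_metric_on (X :|: Y) d ->
  0 < eps -> eps < 1 / 2 -> S \subset Y ->
  x \in X -> pi x \in S -> d x (pi x) = dist_set d x S ->
  is_net d (eps * dist_set d x S) (ballY d Y (pi x) (dist_set d x S / eps)) (N x) ->
  F \subset Y -> F != set0 ->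
  setmin F (dhat d N x) <= dist_set d x F + 3 * eps * dist_set d x S
                             + 3 * eps * dist_set d x F.
Proof.
move=> [d0 d0iff dsym dtri] e0 e12 SY xX piS piD [NB _ Ncov] FY /set0Pn [f0 f0F].
set D := dist_set d x S; set r := dist_set d x F.
rewrite -/D in Ncov NB piD.
have [fs fsF rE] := @setmin_ex _ _ F (d x) f0 f0F.
rewrite -/(dist_set d x F) -/r in rE.
have inXY : forall z, z \in Y -> z \in X :|: Y by move=> z zY; rewrite inE zY orbT.
have xXY : x \in X :|: Y by rewrite inE xX.
have piY : pi x \in Y by apply: (subsetP SY).
have fsY : fs \in Y by apply: (subsetP FY).
have Dge0 : 0 <= D by rewrite -piD; apply: d0 => //; apply: inXY.
have rge0 : 0 <= r by rewrite rE; apply: d0 => //; apply: inXY.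
have NY : forall u, u \in N x -> u \in Y.
  by move=> u /(subsetP NB); rewrite inE => /andP[].
have step : forall u, u \in N x -> setmin F (dhat d N x) <= d x u + d u fs.
  move=> u uN; apply: le_trans (@setmin_le _ _ F (dhat d N x) fs fsF) _.
  exact: (@setmin_le _ _ (N x) (fun u => d x u + d u fs) u uN).
have tri := fun a b c => dtri a b c.
case: (leP (d (pi x) fs) (D / eps)) => H.
- have fsB : fs \in ballY d Y (pi x) (D / eps) by rewrite inE fsY H.
  have [u uN Hu] := Ncov fs fsB.
  have uY := NY u uN.
  have h1 : d x u <= d x fs + d fs u by apply: tri => //; apply: inXY.
  have h2 : d u fs = d fs u by apply: dsym; apply: inXY.
  have h3 := step u uN.
  have h4 : 0 <= eps * r by apply: mulr_ge0 => //; apply: ltW.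
  have h5 : 0 <= eps * D by apply: mulr_ge0 => //; apply: ltW.
  rewrite -rE in h1; nra.
- have piB : pi x \in ballY d Y (pi x) (D / eps).
    rewrite inE piY /= (proj2 (d0iff _ _ (inXY _ piY) (inXY _ piY)) erefl).
    by apply: divr_ge0 => //; apply: ltW.
  have [u uN Hu] := Ncov _ piB.
  have uY := NY u uN.
  have h1 : d u fs <= d u x + d x fs by apply: tri => //; apply: inXY.
  have h2 : d u x = d x u by apply: dsym => //; apply: inXY.
  have h3 := step u uN.
  have h4 : d x u <= d x (pi x) + d (pi x) u by apply: tri => //; apply: inXY.
  have h5 : d (pi x) fs <= d (pi x) x + d x fs by apply: tri => //; apply: inXY.
  have h6 : d (pi x) x = d x (pi x) by apply: dsym => //; apply: inXY.
  have h7 : D / eps * eps = D by rewrite divfK // gt_eqF.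
  have h8 : D / eps * eps < d (pi x) fs * eps by rewrite ltr_pM2r.
  rewrite -rE in h1 h5; rewrite piD in h4 h6.
  have h9 : eps * D <= D / 2 by nra.
  nra.
Qed.

Theorem corollary3p3 (R : realFieldType) (T : finType) (X Y : {set T})
    (d : T -> T -> R) (op : T -> R) (eps c : R) (S : {set T})
    (pi : T -> T) (N : T -> {set T}) :
  is_metric_on (X :|: Y) d ->
  {in Y, forall f, 0 < op f} ->
  0 < eps -> eps < 1 / 2 ->
  c_approx d op X Y S c ->
  {in X, forall x, pi x \in S /\ d x (pi x) = dist_set d x S} ->
  {in X, forall x, is_net d (eps * dist_set d x S)
                     (ballY d Y (pi x) (dist_set d x S / eps)) (N x)} ->
  forall F : {set T}, F \subset Y -> F != set0 ->
    dhat_set d N X F + \sum_(f in F) op f <= (1 + 6 * c * eps) * fl d op X F.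
Proof.
move=> met opp e0 e12 [SY Sn0 Sapx] piP netP F FY Fn0.
have key : dhat_set d N X F <= \sum_(x in X) (dist_set d x F + 3 * eps * dist_set d x S
                             + 3 * eps * dist_set d x F).
  apply: ler_sum => x xX; have [p1 p2] := piP x xX.
  exact: (@perx _ _ X Y d eps S pi N F x met e0 e12 SY xX p1 p2 (netP x xX) FY Fn0).
rewrite !big_split /= -!mulr_sumr in key.
have dge0 : forall x (A : {set T}), x \in X -> A \subset Y -> A != set0 -> 0 <= dist_set d x A.
  move=> x A xX AY /set0Pn [a aA].
  rewrite /dist_set; have [b bA ->] := @setmin_ex _ _ A (d x) a aA.
  case: met => d0 _ _ _.
  by apply: d0; rewrite inE ?xX ?(subsetP AY b bA) ?orbT.
have opge0 : forall A : {set T}, A \subset Y -> 0 <= \sum_(f in A) op f.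
  by move=> A AY; apply: sumr_ge0 => i iA; apply: ltW; apply: opp; apply: (subsetP AY).
have [s sS] := set0Pn _ Sn0.
have OSgt0 : 0 < \sum_(f in S) op f.
  rewrite (bigD1 s) //=; apply: ltr_pwDl; first by apply: opp; apply: (subsetP SY).
  by apply: sumr_ge0 => i /andP[iS _]; apply: ltW; apply: opp; apply: (subsetP SY).
have A0 : 0 <= \sum_(x in X) dist_set d x F by apply: sumr_ge0 => x xX; apply: dge0.
have B0 : 0 <= \sum_(x in X) dist_set d x S by apply: sumr_ge0 => x xX; apply: dge0.
have O0 := opge0 F FY.
have hF := Sapx F FY Fn0.
have hS := Sapx S SY Sn0.
rewrite /fl in hF hS *.
set A := \sum_(x in X) dist_set d x F in key hF A0 *.
set B := \sum_(x in X) dist_set d x S in key hS hF B0 *.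
set O := \sum_(f in F) op f in hF O0 *.
set OS := \sum_(f in S) op f in hS hF OSgt0.
have c1 : 1 <= c by nra.
have h1 : 0 <= eps * ((c - 1) * (A + O)) by apply: mulr_ge0; [lra| nra].
have h2 : 0 <= eps * (c * (A + O) - B - OS) by apply: mulr_ge0; lra.
nra.
Qed.
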